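(* Let $r,s$ be positive integers, let $Q\subseteq [r]\times[s]$, and let $\phi_Q:\mathbb{K}[z_{jk} : (j,k)\in Q]\to \mathbb{K}[x_j,y_k : j\in[r],k\in[s]]$ be the ring homomorphism $z_{jk}\mapsto x_jy_k$, with kernel $I_Q=\ker(\phi_Q)$. Let $m=x_{j_1}x_{j_2}\cdots x_{j_d}$ be a monomial in $\mathbb{K}[x,y]$. Then \[ \phi_Q^{-1}(\langle m\rangle)=\langle z_{j_1k_1}z_{j_2k_2}\cdots z_{j_dk_d} : k_1,\dots,k_d\in[s],\ (j_\ell,k_\ell)\in Q \text{ for all } \ell\rangle + I_Q. \] Similarly, if $n=y_{k_1}y_{k_2}\cdots y_{k_d}$ is a monomial in $\mathbb{K}[x,y]$, then \[ \phi_Q^{-1}(\langle n\rangle)=\langle z_{j_1k_1}z_{j_2k_2}\cdots z_{j_dk_d} : j_1,\dots,j_d\in[r],\ (j_\ell,k_\ell)\in Q \text{ for all } \ell\rangle + I_Q. \]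
   Context: $\mathbb{K}$ is a field and $[r]=\{1,\dots,r\}$. Here $\langle m\rangle$ denotes the ideal of $\mathbb{K}[x,y]$ generated by $m$, and $\phi_Q^{-1}$ denotes the preimage (contraction) of an ideal under $\phi_Q$. *)

(* Defs.v *)
From HB Require Import structures.
From mathcomp Require Import all_boot all_order all_algebra.
From mathcomp Require Import mpoly.
Set Implicit Arguments. Unset Strict Implicit. Unset Printing Implicit Defensive.
Import GRing.Theory.
Local Open Scope ring_scope.

Definition in_ideal (R : comPzRingType) (S : R -> Prop) (p : R) : Prop :=
  exists (gs cs : seq R), (forall g, g \in gs -> S g) /\
    p = \sum_(i < size gs) cs`_i * gs`_i.

Definition xv (K : fieldType) (r s : nat) (j : 'I_r) : {mpoly K[r + s]} :=
  'X_(lshift s j).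
Definition yv (K : fieldType) (r s : nat) (k : 'I_s) : {mpoly K[r + s]} :=
  'X_(rshift r k).
Arguments xv K r s j : clear implicits.
Arguments yv K r s k : clear implicits.

(* K[z_q : q in Q] = {mpoly K[#|Q|]}; the variable with index i : 'I_#|Q|
   is z_(enum_val i), where enum_val i is the i-th element of Q. *)
Definition zpair (r s : nat) (Q : {set 'I_r * 'I_s}) (i : 'I_#|Q|) : 'I_r * 'I_s :=
  enum_val i.

Definition phiQ (K : fieldType) (r s : nat) (Q : {set 'I_r * 'I_s})
  (p : {mpoly K[#|Q|]}) : {mpoly K[r + s]} :=
  mmap (@mpolyC _ K)
    (fun i : 'I_#|Q| => xv K r s (zpair i).1 * yv K r s (zpair i).2) p.

Arguments phiQ K r s Q p : clear implicits.

(* Main.v *)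
Require Import Defs.
From HB Require Import structures.
From mathcomp Require Import all_boot all_order all_algebra.
From mathcomp Require Import mpoly.
From mathcomp Require Import zify.
Set Implicit Arguments. Unset Strict Implicit. Unset Printing Implicit Defensive.
Import GRing.Theory.
Local Open Scope ring_scope.

Section Gen.
Context (K : fieldType) (n N : nat) (F G : 'I_n -> 'I_N).

Definition phiG (p : {mpoly K[n]}) : {mpoly K[N]} :=
  mmap (@mpolyC _ K) (fun i => 'X_(F i) * 'X_(G i)) p.

Definition mono (u : 'X_{1..n}) : 'X_{1..N} :=
  [multinom (\sum_i u i * ((F i == k) + (G i == k)))%N | k < N].

Lemma phiG_M p q : phiG (p * q) = phiG p * phiG q.
Proof. by rewrite /phiG rmorphM. Qed.

Lemma phiGX u : phiG 'X_[u] = 'X_[mono u].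
Proof.
rewrite /phiG mmapX /mmap1.
under eq_bigr do rewrite -mpolyXD.
rewrite mprodXnE; congr 'X_[_]; apply/mnmP => k.
rewrite mnmE mnm_sumE; apply: eq_bigr => i _.
by rewrite mulmnE mnmDE !mnm1E mulnC.
Qed.

Lemma phiGE p : phiG p = \sum_(u <- msupp p) p@_u *: 'X_[mono u].
Proof.
rewrite {1}(mpolyE p) /phiG raddf_sum; apply: eq_bigr => u _.
rewrite /= mmapZ -/(phiG _) phiGX mul_mpolyC.
by [].
Qed.

Lemma phiG_sumZ (T : Type) (s : seq T) (P : pred T) (c : T -> K) (g : T -> 'X_{1..n}) :
  phiG (\sum_(x <- s | P x) c x *: 'X_[g x]) = \sum_(x <- s | P x) c x *: 'X_[mono (g x)].
Proof.
rewrite /phiG raddf_sum; apply: eq_bigr => x _.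
by rewrite /= mmapZ -/(phiG _) phiGX mul_mpolyC.
Qed.
End Gen.

Lemma coeff_sumX (K : fieldType) N (T : Type) (s : seq T) (P : pred T) (c : T -> K)
   (g : T -> 'X_{1..N}) mu :
  (\sum_(x <- s | P x) c x *: 'X_[g x])@_mu = \sum_(x <- s | P x && (g x == mu)) c x.
Proof.
rewrite raddf_sum /= big_mkcondr /=; apply: eq_bigr => x _.
by rewrite mcoeffZ mcoeffX; case: eqP => _; rewrite ?mulr1 ?mulr0.
Qed.

Lemma coeffXM_out (K : fieldType) N (m0 mu : 'X_{1..N}) (q : {mpoly K[N]}) :
  ~~ (m0 <= mu)%MM -> ('X_[m0] * q)@_mu = 0.
Proof.
move=> hm; rewrite {1}(mpolyE q) mulr_sumr.
under eq_bigr do rewrite -scalerAr -mpolyXD.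
rewrite -(big_filter _ predT) /= coeff_sumX big1 // => v /andP[_ /eqP e].
by move: hm; rewrite -e lem_addr.
Qed.

Section Ideal.
Context (R : comPzRingType) (S : R -> Prop).

Lemma in_ideal0 : in_ideal S 0.
Proof. by exists [::], [::]; split => //; rewrite big_ord0. Qed.

Lemma in_idealM c g : S g -> in_ideal S (c * g).
Proof.
move=> Sg; exists [:: g], [:: c]; split; first by move=> h; rewrite inE => /eqP->.
by rewrite big_ord1.
Qed.

Lemma in_idealD a b : in_ideal S a -> in_ideal S b -> in_ideal S (a + b).
Proof.
move=> [gs1 [cs1 [h1 ->]]] [gs2 [cs2 [h2 ->]]].
exists (gs1 ++ gs2), (mkseq (fun i => if (i < size gs1)%N then cs1`_i else cs2`_(i - size gs1)) (size gs1 + size gs2)).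
split; first by move=> g; rewrite mem_cat => /orP[/h1|/h2].
rewrite size_cat big_split_ord /=; congr (_ + _); apply: eq_bigr => i _.
  by rewrite nth_mkseq ?nth_cat /= ?ltn_ord // ltn_addr.
rewrite nth_mkseq ?nth_cat /= ?ltnNge ?leq_addr ?addKn //.
by rewrite -ltnNge ltn_add2l.
Qed.

Lemma in_ideal_sum (T : Type) (s : seq T) (P : pred T) (f : T -> R) :
  (forall x, P x -> in_ideal S (f x)) -> in_ideal S (\sum_(x <- s | P x) f x).
Proof.
move=> h; apply: (big_ind (in_ideal S)); [exact: in_ideal0|exact: in_idealD|exact: h].
Qed.

Lemma in_ideal_mono (S' : R -> Prop) a : (forall g, S g -> S' g) -> in_ideal S a -> in_ideal S' a.
Proof. by move=> hS [gs [cs [h ->]]]; exists gs, cs; split => // g /h /hS. Qed.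

End Ideal.

Section Gen2.
Context (K : fieldType) (n N : nat) (F G : 'I_n -> 'I_N).
Local Notation phi := (@phiG K n N F G).

Lemma ideal_div (S : {mpoly K[n]} -> Prop) M a :
  (forall g, S g -> exists t, phi g = M * t) -> in_ideal S a -> exists q, phi a = M * q.
Proof.
move=> hS [gs [cs [hg ->]]].
elim: gs cs hg => [|g gs IH] cs hg.
  by exists 0; rewrite big_ord0 /phiG raddf0 mulr0.
rewrite /= big_ord_recl.
have [t ht] := hS g (hg g (mem_head _ _)).
have [q hq] : exists q, phi (\sum_(i < size gs) (behead cs)`_i * gs`_i) = M * q.
  by apply: IH => x hx; apply: hg; rewrite inE hx orbT.
exists (phi cs`_0 * t + q).
rewrite /phiG rmorphD rmorphM /= -!/(@phiG K n N F G _) ht.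
have -> : \sum_(i < size gs) cs`_(lift ord0 i) * (g :: gs)`_(lift ord0 i)
   = \sum_(i < size gs) (behead cs)`_i * gs`_i.
  by apply: eq_bigr => i _; rewrite lift0 /= nth_behead.
by rewrite hq mulrDr mulrCA.
Qed.
End Gen2.

Section Comb.
Context (n N : nat) (F G : 'I_n -> 'I_N).

Lemma monoE u k : mono F G u k = (\sum_i u i * ((F i == k) + (G i == k)))%N.
Proof. by rewrite mnmE. Qed.

Lemma comb d (t : 'I_d -> 'I_N) (hG : forall i l, G i != t l) u :
  ((\sum_(l < d) U_(t l)) <= mono F G u)%MM ->
  exists kk : 'I_d -> 'I_n, (forall l, F (kk l) = t l) /\ ((\sum_(l < d) U_(kk l)) <= u)%MM.
Proof.
elim: d t hG u => [|d IH] t hG u H.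
  have f0 : 'I_0 -> 'I_n by case=> m; rewrite ltn0.
  exists f0; split; first by case.
  by apply/mnm_lepP => i; rewrite big_ord0 mnm0E.
move/mnm_lepP: (H) => Hp.
have H0 := Hp (t ord0).
rewrite big_ord_recl mnmDE mnm1E eqxx monoE in H0.
have [i /andP[ui /eqP Fi]] : exists i, (0 < u i)%N && (F i == t ord0).
  apply/existsP; apply: contraTT H0 => /existsPn hn.
  rewrite [X in (_ <= X)%N]big1 // => j _; move: (hn j).
  rewrite negb_and -leqNgt leqn0 => /orP[/eqP->|/negbTE->]; first by rewrite mul0n.
  by rewrite (negbTE (hG j ord0)) muln0.
set u' := (u - U_(i))%MM.
have hu : u = (u' + U_(i))%MM by rewrite submK // lep1mP -lt0n.
have H' : ((\sum_(l < d) U_(t (lift ord0 l))) <= mono F G u')%MM.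
  apply/mnm_lepP => k; have := Hp k.
  have e : mono F G u k = (mono F G u' k + ((F i == k) + (G i == k)))%N.
    rewrite !monoE {1}hu.
    under eq_bigr do rewrite mnmDE mnm1E mulnDl.
    rewrite big_split /= [X in (_ + X)%N](bigD1 i) //= eqxx mul1n.
    rewrite [X in (_ + (_ + X))%N]big1 ?addn0 // => j /negbTE.
    by rewrite eq_sym => ->; rewrite mul0n.
  rewrite e big_ord_recl mnmDE mnm1E Fi.
  case: (eqVneq (G i) k) => [eGk|nGk].
    rewrite (_ : _ (\sum_(l < d) _)%MM k = 0%N) // mnm_sumE big1 // => l _.
    by rewrite mnm1E -eGk eq_sym (negbTE (hG _ _)).
  by rewrite addn0; lia.
have [kk' [hk1 hk2]] := IH (fun l => t (lift ord0 l)) (fun i l => hG i _) u' H'.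
exists (fun l => if unlift ord0 l is Some l' then kk' l' else i); split.
  by move=> l; case: unliftP => [l' ->|->].
rewrite big_ord_recl unlift_none.
under eq_bigr do rewrite liftK.
apply/mnm_lepP => k; rewrite hu !mnmDE addnC leq_add2r.
by move/mnm_lepP: hk2.
Qed.
End Comb.

Section Main.
Context (K : fieldType) (n N : nat) (F G : 'I_n -> 'I_N).
Local Notation phi := (@phiG K n N F G).

Lemma main_gen d (t : 'I_d -> 'I_N) (hG : forall i l, G i != t l) (p : {mpoly K[n]}) :
 (exists q, phi p = (\prod_(l < d) 'X_(t l)) * q) <->
 (exists a b, in_ideal (fun g => exists kk : 'I_d -> 'I_n,
     (forall l, F (kk l) = t l) /\ g = \prod_(l < d) 'X_(kk l)) a
   /\ phi b = 0 /\ p = a + b).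
Proof.
split.
- move=> [q hq].
  set m0 := (\sum_(l < d) U_(t l))%MM.
  have hM : \prod_(l < d) 'X_(t l) = 'X_[m0] :> {mpoly K[N]} by rewrite mprodXE.
  pose P := fun u => (m0 <= mono F G u)%MM.
  exists (\sum_(u <- msupp p | P u) p@_u *: 'X_[u]),
         (\sum_(u <- msupp p | ~~ P u) p@_u *: 'X_[u]).
  split; [|split].
  + apply: in_ideal_sum => u Pu.
    have [kk [hk1 hk2]] := comb hG Pu.
    set w := (\sum_(l < d) U_(kk l))%MM in hk2.
    have -> : p@_u *: 'X_[u] = (p@_u *: 'X_[u - w]) * \prod_(l < d) 'X_(kk l).
      by rewrite mprodXE -scalerAl -mpolyXD submK.
    by apply: in_idealM; exists kk.
  + apply/mpolyP => mu; rewrite mcoeff0 phiG_sumZ.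
    rewrite coeff_sumX.
    case: (boolP (m0 <= mu)%MM) => hmu.
      by rewrite big1 // => u /andP[nP /eqP e]; move: nP; rewrite /P e hmu.
    transitivity ((phi p)@_mu); last by rewrite hq hM coeffXM_out.
    rewrite phiGE coeff_sumX; apply: eq_bigl => u.
    case: eqP => [e|]; rewrite ?andbF ?andbT //.
    by rewrite /P e (negbTE hmu).
  + by rewrite [LHS]mpolyE (bigID P).
- move=> [a [b [ha [hb ->]]]].
  case: (@ideal_div K n N F G _ (\prod_(l < d) 'X_(t l)) a _ ha) => [g [kk [hk ->]]|q hq]; last first.
    by exists q; rewrite /phiG raddfD /= -!/(phi _) hb addr0 hq.
  exists (\prod_(l < d) 'X_(G (kk l))).
  rewrite /phiG rmorph_prod -big_split; apply: eq_bigr => l _.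
  by rewrite /= mmapX mmap1U hk.
Qed.
End Main.

Theorem lemma3p5 (K : fieldType) (r s : nat) (hr : (0 < r)%N) (hs : (0 < s)%N)
  (Q : {set 'I_r * 'I_s}) (d : nat) :
  (* x-monomial m = x_{j_1} ... x_{j_d} *)
  (forall (j : 'I_d -> 'I_r) (p : {mpoly K[#|Q|]}),
     (exists q : {mpoly K[r + s]},
        phiQ K r s Q p = (\prod_(l < d) xv K r s (j l)) * q)
     <->
     (exists a b : {mpoly K[#|Q|]},
        in_ideal (fun g : {mpoly K[#|Q|]} =>
                    exists kk : 'I_d -> 'I_#|Q|,
                      (forall l, (zpair (kk l)).1 = j l) /\
                      g = \prod_(l < d) 'X_(kk l)) a
        /\ phiQ K r s Q b = 0 /\ p = a + b))
  /\
  (* y-monomial n = y_{k_1} ... y_{k_d} *)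
  (forall (k : 'I_d -> 'I_s) (p : {mpoly K[#|Q|]}),
     (exists q : {mpoly K[r + s]},
        phiQ K r s Q p = (\prod_(l < d) yv K r s (k l)) * q)
     <->
     (exists a b : {mpoly K[#|Q|]},
        in_ideal (fun g : {mpoly K[#|Q|]} =>
                    exists jj : 'I_d -> 'I_#|Q|,
                      (forall l, (zpair (jj l)).2 = k l) /\
                      g = \prod_(l < d) 'X_(jj l)) a
        /\ phiQ K r s Q b = 0 /\ p = a + b)).
Proof.
split => [j p | k p].
- have hG : forall (i : 'I_#|Q|) (l : 'I_d), rshift r (zpair i).2 != lshift s (j l) by move=> i l; rewrite eq_rlshift.
  have [H1 H2] := @main_gen K #|Q| (r + s) (fun i => lshift s (zpair i).1)
     (fun i => rshift r (zpair i).2) d (fun l => lshift s (j l)) hG p.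
  have eP : forall b, phiQ K r s Q b = phiG (fun i => lshift s (zpair i).1)
     (fun i => rshift r (zpair i).2) b by [].
  split.
  + move=> [q hq]; have [|a [b [ha [hb e]]]] := H1; first by exists q; rewrite -eP hq.
    exists a, b; split; last by rewrite eP.
    apply: in_ideal_mono ha => g [kk [hk ->]]; exists kk; split => // l.
    exact: (lshift_inj (hk l)).
  + move=> [a [b [ha [hb e]]]]; have [|q hq] := H2; last by exists q; rewrite eP hq.
    exists a, b; split; last by rewrite -eP.
    apply: in_ideal_mono ha => g [kk [hk ->]]; exists kk; split => // l.
    by rewrite /= hk.
- have hG : forall (i : 'I_#|Q|) (l : 'I_d), lshift s (zpair i).1 != rshift r (k l) by move=> i l; rewrite eq_lrshift.
  have [H1 H2] := @main_gen K #|Q| (r + s) (fun i => rshift r (zpair i).2)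
     (fun i => lshift s (zpair i).1) d (fun l => rshift r (k l)) hG p.
  have eP : forall b, phiQ K r s Q b = phiG (fun i => rshift r (zpair i).2)
     (fun i => lshift s (zpair i).1) b.
    move=> b; rewrite /phiQ /phiG /mmap; apply: eq_bigr => m _; congr (_ * _).
    by apply: mmap1_eq => i; rewrite /xv /yv mulrC.
  split.
  + move=> [q hq]; have [|a [b [ha [hb e]]]] := H1; first by exists q; rewrite -eP hq.
    exists a, b; split; last by rewrite eP.
    apply: in_ideal_mono ha => g [kk [hk ->]]; exists kk; split => // l.
    exact: (rshift_inj (hk l)).
  + move=> [a [b [ha [hb e]]]]; have [|q hq] := H2; last by exists q; rewrite eP hq.
    exists a, b; split; last by rewrite -eP.
    apply: in_ideal_mono ha => g [kk [hk ->]]; exists kk; split => // l.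
    by rewrite /= hk.
Qed.
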